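(* Let $0<\epsilon\le0.01$, $\Delta\ge0$, and let $\mathbb{D}_1,\mathbb{D}_2$ be distributions on $(0,\infty)$ with $\mathrm{EMD}(\mathbb{D}_1,\mathbb{D}_2)\le\Delta$. Then for every $\theta\in\mathbb{R}^+$, $$\mathbb{E}_{y\sim\mathbb{D}_1}[g(\theta+\epsilon,y)]\le(1+\epsilon)\left(1+\frac{\Delta}{\epsilon^2}\right)\mathbb{E}_{y\sim\mathbb{D}_2}[g(\theta,y)].$$
   Context: For threshold $\theta\ge0$ and season length $y>0$: $g(\theta,y)=\frac{1+\theta}{\min\{1,y\}}$ if $y\ge\theta$ and $g(\theta,y)=\frac{y}{\min\{1,y\}}$ otherwise (the competitive ratio of the ski-rental strategy that rents, at cost $1$ per unit time, until time $\theta$ and then buys at cost $1$). Earth mover distance: for distributions $\mathbb{X},\mathbb{Y}$ on $\mathbb{R}$, $\mathrm{EMD}(\mathbb{X},\mathbb{Y})=\min\mathbb{E}_{(u,v)\sim\mathbb{J}}|u-v|$ over all couplings $\mathbb{J}$ with marginals $\mathbb{X},\mathbb{Y}$. *)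

(* Defs.v *)
From mathcomp Require Import all_boot all_order all_algebra.
From mathcomp Require Import all_classical all_reals all_analysis.
Set Implicit Arguments. Unset Strict Implicit. Unset Printing Implicit Defensive.
Import Order.TTheory GRing.Theory Num.Theory.
Local Open Scope classical_set_scope.
Local Open Scope ring_scope.

(* competitive ratio of the ski-rental strategy with threshold theta, season y *)
Definition g {R : realType} (theta y : R) : R :=
  if theta <= y then (1 + theta) / Num.min 1 y else y / Num.min 1 y.

Definition supported_pos {R : realType} (D : probability R R) : Prop :=
  D [set y : R | (0 < y)%R] = 1%E.

Definition is_coupling {R : realType} (X Y : probability R R)
  (J : probability (R * R)%type R) : Prop :=
  (forall A : set R, measurable A -> J (fst @^-1` A) = X A) /\
  (forall A : set R, measurable A -> J (snd @^-1` A) = Y A).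

Definition EMD {R : realType} (X Y : probability R R) : \bar R :=
  ereal_inf [set c | exists J : probability (R * R)%type R,
     is_coupling X Y J /\ c = (\int[J]_(p in setT) (`|p.1 - p.2|)%:E)%E].

(* Main.v *)
Require Import Defs.
From mathcomp Require Import all_boot all_order all_algebra.
From mathcomp Require Import all_classical all_reals all_analysis.
From mathcomp Require Import ring lra measurable_realfun.
Import Order.TTheory GRing.Theory Num.Theory.
Local Open Scope classical_set_scope.
Local Open Scope ring_scope.

Lemma mg (R : realType) (t : R) : measurable_fun setT (g t).
Proof.
have minv : measurable_fun setT (@GRing.inv R).
  have -> : [set: R] = ~` [set 0] `|` [set 0] by rewrite setvU.
  apply/measurable_funU => //; first by apply: measurableC.
  split; last exact: measurable_fun_set1.
  apply: measurable_realfun.open_continuous_measurable_fun.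
    rewrite openC; apply: accessible_closed_set1; apply: hausdorff_accessible; exact: Rhausdorff.
  move=> x; rewrite inE /= => /eqP x0. exact: inv_continuous.
have mm : measurable_fun setT (fun y : R => (Num.min 1 y)^-1).
  apply: (measurableT_comp minv); apply: measurable_realfun.measurable_minr => //; exact: measurable_id.
rewrite /g; apply: measurable_fun_ifT.
- by apply: measurable_realfun.measurable_fun_ler => //; exact: measurable_id.
- by apply: measurable_realfun.measurable_funM => //; exact: measurable_cst.
- by apply: measurable_realfun.measurable_funM => //; exact: measurable_id.
Qed.
Lemma g_ge1 (R : realType) (t y : R) : 0 <= t -> 0 < y -> 1 <= g t y.
Proof.
move=> t0 y0; rewrite /g minEle.
have [y1|y1] := leP 1 y; case: ifP => _; rewrite ?divr1 ?mulfV ?gt_eqF //.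
- lra.
- rewrite ler_pdivlMr // mul1r; lra.
Qed.
Lemma key (R : realType) (t e u v : R) : 0 <= t -> 0 < e -> e <= 1/100 ->
  0 < u -> 0 < v ->
  g (t + e) u <= (1 + e) * g t v + (1 + e) * `|u - v| / e ^+ 2.
Proof.
move=> t0 e0 e1 u0 v0.
have iu : u * u^-1 = 1 by rewrite mulfV ?gt_eqF.
have iv : v * v^-1 = 1 by rewrite mulfV ?gt_eqF.
have iu0 : 0 < u^-1 by rewrite invr_gt0.
have iv0 : 0 < v^-1 by rewrite invr_gt0.
have ie : e ^+ 2 * (e ^+ 2)^-1 = 1 by rewrite mulfV // expf_neq0 // gt_eqF.
have ie0 : 0 < (e ^+ 2)^-1 by rewrite invr_gt0 exprn_gt0.
set E := (e ^+ 2)^-1 in ie ie0 *.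
rewrite expr2 in ie.
have Fv1 : v < 1 -> 1 + t <= (1 + t) / v.
  move=> v1; rewrite ler_pdivlMr //; nra.
have Fuv : v <= u -> (1 + t) / u <= (1 + t) / v.
  move=> vu; rewrite ler_pdivrMr // mulrAC ler_pdivlMr //; nra.
rewrite /g !minEle.
have [uv|uv] := leP v u.
{
  rewrite ger0_norm ?subr_ge0 //.
  have hE1 : 1 <= E by nra.
  rewrite -mulrA.
  have hD0 : 0 <= (u - v) * E by nra.
  have hD : e * e * ((u - v) * E) = u - v by rewrite mulrCA ie mulr1.
  have hDuv : u - v <= (u - v) * E by nra.
  move: hD0 hD hDuv; set D := (u - v) * E => hD0 hD hDuv.
  have hDe : D <= (1 + e) * D by nra.
  have [h1|h1] := leP (t+e) u; have [h2|h2] := leP 1 u; have [h3|h3] := leP t v;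
   have [h4|h4] := leP 1 v; rewrite ?divr1 ?mulfV ?gt_eqF //.
  all: try nra.
  - have h7 : (1 + (t + e)) / u <= (1 + e) * ((1 + t) / u).
    by rewrite mulrA; apply: ler_wpM2r; [exact: ltW | nra].
    have := Fuv uv; nra.
  - rewrite ler_pdivrMr //.
    have eD1 : 1 <= e * D by nra.
    have uD1 : 1 <= u * D by nra.
    nra.
}
rewrite ltr0_norm ?subr_lt0 // opprB.
have hE1 : 1 <= E by nra.
rewrite -mulrA.
have hD0 : 0 <= (v - u) * E by nra.
have hD : e * e * ((v - u) * E) = v - u by rewrite mulrCA ie mulr1.
have hDuv : v - u <= (v - u) * E by nra.
move: hD0 hD hDuv; set D := (v - u) * E => hD0 hD hDuv.
have hDe : D <= (1 + e) * D by nra.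
have [h1|h1] := leP (t+e) u; have [h2|h2] := leP 1 u; have [h3|h3] := leP t v;
   have [h4|h4] := leP 1 v; rewrite ?divr1 ?mulfV ?gt_eqF //.
all: try nra.
- rewrite ler_pdivrMr //.
  have ee1 : e * e <= e by nra.
  have h5 : e * e * (1 + t) <= u by nra.
  have h6 : e * e * (1 + t) * (1 - u) <= e * e * (u * D) by nra.
  have h7 : (1 + t) * (1 - u) <= u * D by nra.
  nra.
- have ee1 : e * e <= e by nra.
  have h5' : e * e * (1 + t) <= u by nra.
  have h5 : e * e * (1 + t) <= u * v by nra.
  have hab : u^-1 - v^-1 = (v - u) * u^-1 * v^-1.
    by rewrite -mulrA mulrBl (mulrCA v) (mulrA u) !mulfV ?gt_eqF // mulr1 mul1r.
  have h6 : (1 + t) * (u^-1 - v^-1) <= D.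
    have huv : u * v * (u^-1 * v^-1) = 1 by rewrite -invfM mulfV // mulf_neq0 // gt_eqF.
    rewrite hab -hD -!mulrA.
    move: huv; set P := u^-1 * v^-1 => huv.
    have hp : 0 <= D * P by rewrite mulr_ge0 // mulr_ge0 // ltW.
    have hDP : u * v * (D * P) = D by rewrite mulrCA huv mulr1.
    have h8 := ler_wpM2r hp h5; rewrite hDP in h8.
    apply: le_trans h8; rewrite le_eqVlt; apply/orP; left; apply/eqP.
    by rewrite /D; ring.
  have h7 : (1 + (t + e)) / u <= (1 + e) * ((1 + t) / u).
    by rewrite mulrA; apply: ler_wpM2r; [exact: ltW | nra].
  nra.
Qed.

Lemma gE_ge0 (R : realType) (t y : R) : 0 <= t -> 0 < y -> (0 <= (g t y)%:E)%E.
Proof. by move=> t0 y0; rewrite lee_fin (le_trans _ (@g_ge1 R t y t0 y0)). Qed.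


Lemma bound (R : realType) (eps theta : R) (D1 D2 : probability R R)
  (J : probability (R * R)%type R) :
  0 < eps -> eps <= 1 / 100 -> 0 <= theta -> supported_pos D2 ->
  is_coupling D1 D2 J ->
  (\int[D1]_(y in [set y : R | (0 < y)%R]) (g (theta + eps) y)%:E <=
   (1 + eps)%:E * \int[D2]_(y in [set y : R | (0 < y)%R]) (g theta y)%:E +
   ((1 + eps) / eps ^+ 2)%:E * \int[J]_(p in setT) (`|p.1 - p.2|)%:E)%E.
Proof.
move=> e0 e1 th0 hD2 [cJ1 cJ2].
set P := [set y : R | (0 < y)%R].
have mP : measurable P.
  rewrite (_ : P = `]0%R, +oo[%classic); first exact: measurable_itv.
  by apply/seteqP; split => x /=; rewrite in_itv /= andbT.
have mgE : forall t, measurable_fun setT (fun y : R => (g t y)%:E).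
  by move=> t; apply/measurable_realfun.measurable_EFinP; exact: mg.
have L1 : (\int[D1]_(y in P) (g (theta + eps) y)%:E =
    \int[J]_(p in fst @^-1` P) (g (theta + eps) p.1)%:E)%E.
  transitivity (\int[pushforward J fst]_(y in P) (g (theta + eps) y)%:E)%E.
    by apply: eq_measure_integral => A mA _ /=; symmetry; exact: cJ1.
  have hpos : {in P, forall y, (0 <= (g (theta + eps) y)%:E)%E}.
    by move=> y; rewrite inE /= => y0; apply: gE_ge0 => //; rewrite addr_ge0 // ltW.
  exact: (ge0_integral_pushforward measurable_fst J mP (measurable_funTS (mgE _)) hpos).
have mfst : measurable_fun setT (@fst R R) := measurable_fst.
have msnd : measurable_fun setT (@snd R R) := measurable_snd.
have mfP : measurable (fst @^-1` P : set (R * R)).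
  by rewrite -[X in measurable X]setTI; exact: mfst.
have msP : measurable (snd @^-1` P : set (R * R)).
  by rewrite -[X in measurable X]setTI; exact: msnd.
set N : set (R * R) := snd @^-1` (~` P).
have mN : measurable N.
  by rewrite -[X in measurable X]setTI; apply: msnd => //; exact: measurableC.
have JN : J N = 0%E.
  rewrite /N cJ2; last exact: measurableC.
  by rewrite probability_setC // hD2 subee.
set Q : set (R * R) := fst @^-1` P `&` snd @^-1` P.
have mQ : measurable Q by exact: measurableI.
have L2 : (\int[J]_(p in fst @^-1` P) (g (theta + eps) p.1)%:E =
    \int[J]_(p in Q) (g (theta + eps) p.1)%:E)%E.
  rewrite (@ge0_negligible_integral _ _ _ J _ N _ mN mfP).
  - by rewrite /Q /N setDE preimage_setC setCK.
  - exact: (measurable_funTS (measurableT_comp (mgE (theta + eps)) mfst)).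
  - by move=> p /= p0; apply: gE_ge0 => //; rewrite addr_ge0 // ltW.
  - exact: JN.
rewrite L1 L2.
set c := (1 + eps) / eps ^+ 2.
have c0 : 0 <= c by rewrite divr_ge0 // ?exprn_ge0 // ?addr_ge0 // ltW.
have mF1 : measurable_fun setT (fun p : R * R => ((1 + eps) * g theta p.2)%:E).
  apply/measurable_EFinP.
  exact: (measurable_funM (measurable_cst (1 + eps)) (measurableT_comp (@mg R theta) msnd)).
have mF2 : measurable_fun setT (fun p : R * R => (c * `|p.1 - p.2|)%:E).
  apply/measurable_EFinP.
  exact: (measurable_funM (measurable_cst c)
    (measurableT_comp (@normr_measurable R setT) (measurable_funB mfst msnd))).
have F1pos : forall p : R * R, 0 < p.2 -> (0 <= ((1 + eps) * g theta p.2)%:E)%E.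
  move=> p p0; rewrite lee_fin; apply: mulr_ge0; first by rewrite addr_ge0 // ltW.
  exact: (le_trans ler01 (@g_ge1 R theta p.2 th0 p0)).
have F2pos : forall p : R * R, (0 <= (c * `|p.1 - p.2|)%:E)%E.
  by move=> p; rewrite lee_fin mulr_ge0.
apply: (@le_trans _ _ (\int[J]_(p in Q) (((1 + eps) * g theta p.2)%:E + (c * `|p.1 - p.2|)%:E))%E).
  apply: ge0_le_integral => //.
  - by move=> p [p1 p2]; apply: gE_ge0 => //; rewrite addr_ge0 // ltW.
  - exact: (measurable_funTS (measurableT_comp (mgE (theta + eps)) mfst)).
  - exact: (emeasurable_funD (measurable_funTS mF1) (measurable_funTS mF2)).
  - move=> p [/= p1 p2]; rewrite -EFinD lee_fin /c mulrAC.
    exact: key.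
rewrite ge0_integralD //.
2: by move=> p [_ p2]; apply: F1pos.
2: exact: measurable_funTS.
2: exact: measurable_funTS.
apply: leeD.
  apply: (@le_trans _ _ (\int[J]_(p in snd @^-1` P) ((1 + eps) * g theta p.2)%:E)%E).
    apply: ge0_subset_integral => //.
    - exact: measurable_funTS.
    - by move=> p [].
  under eq_integral => p _ do rewrite EFinM.
  rewrite ge0_integralZl //; last 3 first.
  - exact: (measurable_funTS (measurableT_comp (mgE theta) msnd)).
  - by move=> p /= p2; apply: gE_ge0.
  - by rewrite lee_fin addr_ge0 // ltW.
  rewrite le_eqVlt; apply/orP; left; apply/eqP; congr (_ * _)%E.
  symmetry.
  transitivity (\int[pushforward J snd]_(y in P) (g theta y)%:E)%E.
    by apply: eq_measure_integral => A mA _ /=; symmetry; exact: cJ2.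
  have hpos : {in P, forall y, (0 <= (g theta y)%:E)%E}.
    by move=> y; rewrite inE /= => y0; apply: gE_ge0.
  exact: (ge0_integral_pushforward measurable_snd J mP (measurable_funTS (mgE _)) hpos).
apply: (@le_trans _ _ (\int[J]_(p in setT) (c * `|p.1 - p.2|)%:E)%E).
  apply: ge0_subset_integral => //.
under eq_integral => p _ do rewrite EFinM.
rewrite ge0_integralZl //.
apply/measurable_EFinP.
exact: (measurableT_comp (@normr_measurable R setT) (measurable_funB mfst msnd)).
Qed.

Lemma fin_comb (R : realType) (eps Delta : R) (L E2 : \bar R) :
 0 < eps -> 0 <= Delta -> (1 <= E2)%E ->
 (forall d : R, 0 < d -> (L <= (1 + eps)%:E * E2 + ((1 + eps) / eps ^+ 2)%:E * (Delta + d)%:E)%E) ->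
 (L <= ((1 + eps) * (1 + Delta / eps ^+ 2))%:E * E2)%E.
Proof.
move=> e0 D0; case: E2 => [e| |] // he H.
- rewrite lee_fin in he.
  apply/lee_addgt0Pr => d d0.
  have e2 : 0 < eps ^+ 2 by rewrite exprn_gt0.
  have e1 : 0 < 1 + eps by rewrite addr_gt0.
  have dd : 0 < d * eps ^+ 2 / (1 + eps) by rewrite divr_gt0 // mulr_gt0.
  apply: (le_trans (H _ dd)).
  rewrite -!EFinM -!EFinD lee_fin.
  have -> : (1 + eps) / eps ^+ 2 * (Delta + d * eps ^+ 2 / (1 + eps)) =
     (1 + eps) * (Delta / eps ^+ 2) + d.
    field; apply/andP; split; rewrite gt_eqF //.
  have k0 : 0 <= Delta / eps ^+ 2 by rewrite divr_ge0 // ltW.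
  move: k0; set k := Delta / eps ^+ 2 => k0.
  have hh : 0 <= (1 + eps) * k * (e - 1).
    by apply: mulr_ge0; [apply: mulr_ge0 => //; exact: ltW | rewrite subr_ge0].
  nra.
- rewrite gt0_muley ?leey // lte_fin; apply: mulr_gt0; first by rewrite addr_gt0.
  have : 0 <= Delta / eps ^+ 2 by rewrite divr_ge0 // exprn_ge0 // ltW.
  lra.
Qed.

Theorem mainTheorem6 (R : realType) (eps Delta : R) (D1 D2 : probability R R)
  (heps0 : 0 < eps) (heps1 : eps <= 1 / 100) (hDelta : 0 <= Delta)
  (hD1 : supported_pos D1) (hD2 : supported_pos D2)
  (hEMD : (EMD D1 D2 <= Delta%:E)%E) :
  forall theta : R, 0 <= theta ->
  (\int[D1]_(y in [set y : R | (0 < y)%R]) (g (theta + eps) y)%:E <=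
   ((1 + eps) * (1 + Delta / eps ^+ 2))%:E *
     \int[D2]_(y in [set y : R | (0 < y)%R]) (g theta y)%:E)%E.
Proof.
move=> theta th0.
set P := [set y : R | (0 < y)%R].
have mP : measurable P.
  rewrite (_ : P = `]0%R, +oo[%classic); first exact: measurable_itv.
  by apply/seteqP; split => x /=; rewrite in_itv /= andbT.
apply: fin_comb => //.
- have h1 : (\int[D2]_(y in P) (cst 1%E y) = 1)%E.
    by rewrite integral_cst // mul1e; exact: hD2.
  rewrite -h1; apply: ge0_le_integral => //.
  + apply: measurable_funTS; apply/measurable_EFinP; exact: mg.
  + by move=> y y0; rewrite /= lee_fin; apply: g_ge1.
- move=> d d0.
  have : (EMD D1 D2 < (Delta + d)%:E)%E.
    by apply: (le_lt_trans hEMD); rewrite lte_fin ltrDl.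
  rewrite /EMD => /ereal_inf_lt [y [J [cJ ->]] hy].
  apply: (le_trans (@bound R eps theta D1 D2 J heps0 heps1 th0 hD2 cJ)).
  apply: leeD2l; apply: lee_wpmul2l.
    by rewrite lee_fin divr_ge0 ?exprn_ge0 ?addr_ge0 // ltW.
  exact: ltW.
Qed.
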